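(* Let $m_1,m_2,m_3,m_4>0$, $M=m_1+m_2+m_3+m_4$. For $\mathbf{r}=(r_{12},r_{13},r_{14},r_{23},r_{24},r_{34})$ let $U(\mathbf{r})=\sum_{i<j}\frac{m_im_j}{r_{ij}}$, $I(\mathbf{r})=\frac{1}{2M}\sum_{i<j}m_im_jr_{ij}^2$, $P(\mathbf{r})=r_{12}r_{34}+r_{14}r_{23}-r_{13}r_{24}$, and $\mathcal{M}^+=\{\mathbf{r}\in[0,\infty)^6 : I(\mathbf{r})=1,\ P(\mathbf{r})=0\}$. If $\mathbf{r}^\ast\in\mathcal{M}^+$ is a critical point of the restriction $U|_{\mathcal{M}^+}$, then $\mathbf{r}^\ast$ is a nondegenerate local minimum point of $U|_{\mathcal{M}^+}$.
   Context: $U$ is $+\infty$ on the boundary of $\mathcal{M}^+$ (where some $r_{ij}=0$), so critical points lie in the part of $\mathcal{M}^+$ where all $r_{ij}>0$, which is a smooth 4-dimensional manifold. Equivalently, $\mathbf{r}^\ast$ is a critical point iff there exist Lagrange multipliers $\lambda,\sigma\in\mathbb{R}$ with $\nabla_{\mathbf{r}}\big(U+\lambda M(I-1)+\sigma P\big)(\mathbf{r}^\ast)=0$, i.e. $m_1m_2(r_{12}^{-3}-\lambda)=\sigma r_{34}/r_{12}$, $m_3m_4(r_{34}^{-3}-\lambda)=\sigma r_{12}/r_{34}$, $m_1m_3(r_{13}^{-3}-\lambda)=-\sigma r_{24}/r_{13}$, $m_2m_4(r_{24}^{-3}-\lambda)=-\sigma r_{13}/r_{24}$, $m_1m_4(r_{14}^{-3}-\lambda)=\sigma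 r_{23}/r_{14}$, $m_2m_3(r_{23}^{-3}-\lambda)=\sigma r_{14}/r_{23}$. *)

(* Defs.v *)
From Stdlib Require Import Reals.
From Coquelicot Require Import Coquelicot.
Open Scope R_scope.

(* A configuration r = (r12, r13, r14, r23, r24, r34) is encoded as a function
   nat -> R, read only at indices 0..5:
   r 0 = r12, r 1 = r13, r 2 = r14, r 3 = r23, r 4 = r24, r 5 = r34. *)
Definition config := nat -> R.

Definition mpair (m1 m2 m3 m4 : R) (k : nat) : R :=
  match k with
  | 0%nat => m1 * m2 | 1%nat => m1 * m3 | 2%nat => m1 * m4
  | 3%nat => m2 * m3 | 4%nat => m2 * m4 | _ => m3 * m4
  end.

Definition Mtot (m1 m2 m3 m4 : R) : R := m1 + m2 + m3 + m4.

Definition sum6 (f : nat -> R) : R := sum_f_R0 f 5.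

Definition Upot (m1 m2 m3 m4 : R) (r : config) : R :=
  sum6 (fun k => mpair m1 m2 m3 m4 k / r k).

Definition Imom (m1 m2 m3 m4 : R) (r : config) : R :=
  / (2 * Mtot m1 m2 m3 m4) * sum6 (fun k => mpair m1 m2 m3 m4 k * (r k) ^ 2).

Definition Pcay (r : config) : R := r 0%nat * r 5%nat + r 2%nat * r 3%nat - r 1%nat * r 4%nat.

Definition Mplus (m1 m2 m3 m4 : R) (r : config) : Prop :=
  (forall k, (k < 6)%nat -> 0 <= r k) /\ Imom m1 m2 m3 m4 r = 1 /\ Pcay r = 0.

Definition upd (r : config) (k : nat) (t : R) : config :=
  fun i => if Nat.eqb i k then t else r i.
Definition pd (f : config -> R) (k : nat) (r : config) : R :=
  Derive (fun t => f (upd r k t)) (r k).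
Definition hess (f : config -> R) (i j : nat) (r : config) : R :=
  pd (fun x => pd f j x) i r.

Definition Lagr (m1 m2 m3 m4 lam sig : R) (r : config) : R :=
  Upot m1 m2 m3 m4 r + lam * Mtot m1 m2 m3 m4 * (Imom m1 m2 m3 m4 r - 1) + sig * Pcay r.

Definition lagrange_mult (m1 m2 m3 m4 : R) (r : config) (lam sig : R) : Prop :=
  forall k, (k < 6)%nat -> pd (Lagr m1 m2 m3 m4 lam sig) k r = 0.

(* critical point of U restricted to M^+ (necessarily in the smooth part where
   all r_ij > 0), characterized by Lagrange multipliers as in the paper *)
Definition critical_point (m1 m2 m3 m4 : R) (r : config) : Prop :=
  Mplus m1 m2 m3 m4 r /\ (forall k, (k < 6)%nat -> 0 < r k) /\
  exists lam sig, lagrange_mult m1 m2 m3 m4 r lam sig.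

Definition local_min_on_Mplus (m1 m2 m3 m4 : R) (rs : config) : Prop :=
  exists eps, 0 < eps /\
    forall r, Mplus m1 m2 m3 m4 r ->
      (forall k, (k < 6)%nat -> Rabs (r k - rs k) < eps) ->
      Upot m1 m2 m3 m4 rs <= Upot m1 m2 m3 m4 r.

Definition tangent (m1 m2 m3 m4 : R) (r v : config) : Prop :=
  sum6 (fun k => pd (Imom m1 m2 m3 m4) k r * v k) = 0 /\
  sum6 (fun k => pd Pcay k r * v k) = 0.

(* Nondegeneracy of the minimum: the Hessian of U|_{M^+} at the critical point,
   i.e. the Hessian of the Lagrangian restricted to the tangent space, is
   positive definite. *)
Definition nondeg_min_hessian (m1 m2 m3 m4 : R) (rs : config) : Prop :=
  forall lam sig, lagrange_mult m1 m2 m3 m4 rs lam sig ->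
  forall v : config, tangent m1 m2 m3 m4 rs v ->
    (exists k, (k < 6)%nat /\ v k <> 0) ->
    0 < sum6 (fun i => sum6 (fun j =>
          v i * v j * hess (Lagr m1 m2 m3 m4 lam sig) i j rs)).

(* Main.v *)
Require Import Defs.
From Stdlib Require Import Reals.
From Coquelicot Require Import Coquelicot.
From Stdlib Require Import Lra Lia.
Open Scope R_scope.

Definition dP (x:config) (j:nat) : R := match j with 0%nat => x 5%nat | 1%nat => - x 4%nat | 2%nat => x 3%nat | 3%nat => x 2%nat | 4%nat => - x 1%nat | _ => x 0%nat end.
Definition gL m1 m2 m3 m4 lam sig j (x:config) := - mpair m1 m2 m3 m4 j / (x j)^2 + lam * mpair m1 m2 m3 m4 j * x j + sig * dP x j.

Lemma pd_L m1 m2 m3 m4 lam sig j x : Mtot m1 m2 m3 m4 <> 0 -> (j < 6)%nat -> x j <> 0 ->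
  pd (Lagr m1 m2 m3 m4 lam sig) j x = gL m1 m2 m3 m4 lam sig j x.
Proof.
intros HM Hj Hx.
destruct j as [|[|[|[|[|[|j]]]]]]; try lia;
unfold pd, Lagr, Upot, Imom, Pcay, sum6, upd, gL, dP, mpair, Mtot in *; simpl in *;
apply is_derive_unique; auto_derive; try (repeat split; auto; fail); field; auto.
Qed.


Definition cP (i j : nat) : R := dP (fun l => if Nat.eqb l i then 1 else 0) j.
Definition Hc m1 m2 m3 m4 lam sig i j (rs:config) : R :=
  (if Nat.eqb i j then 2 * mpair m1 m2 m3 m4 i / (rs i)^3 + lam * mpair m1 m2 m3 m4 i else 0) + sig * cP i j.

Lemma hess_L m1 m2 m3 m4 lam sig i j rs : Mtot m1 m2 m3 m4 <> 0 -> (i < 6)%nat -> (j < 6)%nat ->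
  (forall k, (k < 6)%nat -> rs k <> 0) ->
  hess (Lagr m1 m2 m3 m4 lam sig) i j rs = Hc m1 m2 m3 m4 lam sig i j rs.
Proof.
intros HM Hi Hj Hk.
unfold hess; change (Derive (fun t => pd (Lagr m1 m2 m3 m4 lam sig) j (upd rs i t)) (rs i) = Hc m1 m2 m3 m4 lam sig i j rs).
rewrite (Derive_ext_loc _ (fun t => gL m1 m2 m3 m4 lam sig j (upd rs i t))).
2:{ assert (Hp : 0 < Rabs (rs i)) by (apply Rabs_pos_lt; auto).
  exists (mkposreal _ Hp). intros y Hy. apply pd_L; auto.
  unfold upd. destruct (Nat.eqb j i) eqn:E.
  - apply Nat.eqb_eq in E; subst j. intro H0; subst y.
    change (Rabs (0 - rs i) < Rabs (rs i)) in Hy.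
    rewrite Rminus_0_l, Rabs_Ropp in Hy; lra.
  - auto. }
assert (Hi0 := Hk i Hi).
destruct i as [|[|[|[|[|[|i]]]]]]; try lia;
destruct j as [|[|[|[|[|[|j]]]]]]; try lia;
unfold gL, upd, Hc, cP, dP, mpair; simpl;
apply is_derive_unique; auto_derive; try (repeat split; auto; fail); field; auto.
Qed.


Lemma Q_nonneg A B c x y : 0 < A -> c * c <= A * B -> 0 <= A * x^2 + B * y^2 + 2 * c * x * y.
Proof.
intros HA Hc.
assert (E : A * (A * x^2 + B * y^2 + 2 * c * x * y) = (A*x + c*y)^2 + (A*B - c*c) * y^2) by ring.
assert (0 <= (A*x + c*y)^2 + (A*B - c*c) * y^2).
{ apply Rplus_le_le_0_compat. apply pow2_ge_0. apply Rmult_le_pos. lra. apply pow2_ge_0. }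
rewrite <- E in H. nra.
Qed.

Lemma Q_pos A B c x y : 0 < A -> c * c < A * B -> (x <> 0 \/ y <> 0) -> 0 < A * x^2 + B * y^2 + 2 * c * x * y.
Proof.
intros HA Hc Hxy.
assert (E : A * (A * x^2 + B * y^2 + 2 * c * x * y) = (A*x + c*y)^2 + (A*B - c*c) * y^2) by ring.
destruct (Req_dec y 0) as [Hy|Hy].
- subst y. destruct Hxy as [Hx|Hx]; [|lra].
  assert (0 < x^2) by (apply pow2_gt_0; auto). nra.
- assert (0 < y^2) by (apply pow2_gt_0; auto).
  assert (0 < (A*x + c*y)^2 + (A*B - c*c) * y^2).
  { assert (0 <= (A*x + c*y)^2) by apply pow2_ge_0. nra. }
  rewrite <- E in H0. nra.
Qed.

Lemma pairPD m m' s s' lam t : 0 < m -> 0 < m' -> 0 < s -> 0 < s' -> 0 < lam ->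
  - m / s^2 + lam * m * s + t * s' = 0 ->
  - m' / s'^2 + lam * m' * s' + t * s = 0 ->
  t * t < (2 * m / s^3 + lam * m) * (2 * m' / s'^3 + lam * m').
Proof.
intros Hm Hm' Hs Hs' Hl E1 E2.
set (u := lam * m). set (w := lam * m').
assert (Hu : 0 < u) by (unfold u; nra). assert (Hw : 0 < w) by (unfold w; nra).
set (p := t * s' / s). set (q := t * s / s').
assert (Ha : m / s^3 = u + p).
{ unfold u, p. apply (Rmult_eq_reg_r s); [|lra].
  replace (m / s^3 * s) with (m / s^2) by (field; lra).
  replace ((lam * m + t * s' / s) * s) with (lam * m * s + t * s') by (field; lra). lra. }
assert (Hb : m' / s'^3 = w + q).
{ unfold w, q. apply (Rmult_eq_reg_r s'); [|lra].
  replace (m' / s'^3 * s') with (m' / s'^2) by (field; lra).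
  replace ((lam * m' + t * s / s') * s') with (lam * m' * s' + t * s) by (field; lra). lra. }
assert (Hpq : p * q = t * t) by (unfold p, q; field; lra).
assert (Ha0 : 0 < m / s^3) by (apply Rdiv_lt_0_compat; [lra | apply pow_lt; lra]).
assert (Hb0 : 0 < m' / s'^3) by (apply Rdiv_lt_0_compat; [lra | apply pow_lt; lra]).
replace (2 * m / s^3) with (2 * (m / s^3)) by (unfold Rdiv; ring).
replace (2 * m' / s'^3) with (2 * (m' / s'^3)) by (unfold Rdiv; ring).
rewrite Ha, Hb, <- Hpq. fold u w.
destruct (Rle_dec 0 t) as [Ht|Ht].
- assert (0 <= p) by (unfold p; apply Rmult_le_pos; [apply Rmult_le_pos; lra| left; apply Rinv_0_lt_compat; lra]).
  assert (0 <= q) by (unfold q; apply Rmult_le_pos; [apply Rmult_le_pos; lra| left; apply Rinv_0_lt_compat; lra]).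
  clearbody p q u w. assert (0 < u*w) by nra. assert (0 <= p*w) by nra. assert (0 <= u*q) by nra. assert (0 <= p*q) by nra.
  nra.
- assert (Ht' : t < 0) by lra.
  assert (p <= 0).
  { unfold p. unfold Rdiv. assert (0 < / s) by (apply Rinv_0_lt_compat; lra). assert (t * s' < 0) by nra. nra. }
  assert (q <= 0).
  { unfold q. unfold Rdiv. assert (0 < / s') by (apply Rinv_0_lt_compat; lra). assert (t * s < 0) by nra. nra. }
  clearbody p q u w. assert (u > -p) by lra. assert (w > -q) by lra.
  assert (u*w >= p*q) by nra. assert (0 < u*w) by nra. nra.
Qed.

Lemma alpha_bound m s r lam d : 0 < m -> 0 < s -> 0 < lam -> 0 <= d -> 0 < r -> r <= (1 + d) * s ->
  (2 * m / s^3 + lam * m) / (2 * (1 + d)) <= m / (s^2 * r) + lam * m / 2.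
Proof.
intros Hm Hs Hl Hd Hr Hrs.
assert (H1 : m / (s^3 * (1 + d)) <= m / (s^2 * r)).
{ unfold Rdiv. apply Rmult_le_compat_l; [lra|]. apply Rinv_le_contravar.
  apply Rmult_lt_0_compat; [apply pow_lt; lra | lra].
  replace (s^3 * (1+d)) with (s^2 * ((1+d)*s)) by ring.
  apply Rmult_le_compat_l; [apply pow_le; lra | lra]. }
assert (H2 : lam * m / (2 * (1+d)) <= lam * m / 2).
{ unfold Rdiv. apply Rmult_le_compat_l; [nra|]. apply Rinv_le_contravar; lra. }
replace ((2 * m / s^3 + lam * m) / (2 * (1 + d))) with (m / (s^3 * (1 + d)) + lam * m / (2 * (1+d))).
2:{ field. repeat split; lra. }
lra.
Qed.

Lemma pair_nonneg m m' s s' r r' lam c d : 0 < m -> 0 < m' -> 0 < s -> 0 < s' -> 0 < lam -> 0 <= d ->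
  0 < r -> r <= (1+d)*s -> 0 < r' -> r' <= (1+d)*s' ->
  (1+d)^2 * (c*c) <= (2 * m / s^3 + lam * m) * (2 * m' / s'^3 + lam * m') ->
  0 <= (m / (s^2 * r) + lam * m / 2) * (r - s)^2 + (m' / (s'^2 * r') + lam * m' / 2) * (r' - s')^2
        + c * (r - s) * (r' - s').
Proof.
intros Hm Hm' Hs Hs' Hl Hd Hr Hrs Hr' Hrs' Hc.
pose proof (alpha_bound m s r lam d Hm Hs Hl Hd Hr Hrs) as B1.
pose proof (alpha_bound m' s' r' lam d Hm' Hs' Hl Hd Hr' Hrs') as B2.
set (A := 2 * m / s^3 + lam * m) in *. set (B := 2 * m' / s'^3 + lam * m') in *.
assert (HA : 0 < A).
{ unfold A. assert (0 < 2 * m / s^3) by (apply Rdiv_lt_0_compat; [lra | apply pow_lt; lra]). nra. }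
assert (HB : 0 < B).
{ unfold B. assert (0 < 2 * m' / s'^3) by (apply Rdiv_lt_0_compat; [lra | apply pow_lt; lra]). nra. }
set (al := m / (s^2 * r) + lam * m / 2) in *. set (be := m' / (s'^2 * r') + lam * m' / 2) in *.
assert (H1 : 0 < A / (2 * (1+d))) by (apply Rdiv_lt_0_compat; lra).
assert (H2 : 0 < B / (2 * (1+d))) by (apply Rdiv_lt_0_compat; lra).
assert (Hab : A / (2*(1+d)) * (B / (2*(1+d))) <= al * be) by (apply Rmult_le_compat; lra).
assert (Hk : (c/2) * (c/2) <= A / (2*(1+d)) * (B / (2*(1+d)))).
{ replace (A / (2*(1+d)) * (B / (2*(1+d)))) with (A * B / (4 * (1+d)^2)) by (field; lra).
  apply (Rmult_le_reg_r (4 * (1+d)^2)). nra.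
  replace (A * B / (4 * (1 + d) ^ 2) * (4 * (1 + d) ^ 2)) with (A*B) by (field; lra).
  nra. }
pose proof (Q_nonneg al be (c/2) (r - s) (r' - s') ltac:(lra) ltac:(lra)).
replace (c * (r - s) * (r' - s')) with (2 * (c/2) * (r-s) * (r'-s')) by field. lra.
Qed.

Lemma choose_d (X Y Z c : R) : c * c < X -> c * c < Y -> c * c < Z ->
  exists d, 0 < d <= 1 /\ (1+d)^2 * (c*c) <= X /\ (1+d)^2 * (c*c) <= Y /\ (1+d)^2 * (c*c) <= Z.
Proof.
intros HX HY HZ.
set (k := 3 * (c*c) + 1).
assert (Hk : 0 < k) by (unfold k; nra).
exists (Rmin 1 (Rmin ((X - c*c)/k) (Rmin ((Y - c*c)/k) ((Z - c*c)/k)))).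
set (d := Rmin 1 (Rmin ((X - c*c)/k) (Rmin ((Y - c*c)/k) ((Z - c*c)/k)))).
assert (d1 : d <= 1) by apply Rmin_l.
assert (dX : d <= (X - c*c)/k) by (unfold d; eapply Rle_trans; [apply Rmin_r| apply Rmin_l]).
assert (dY : d <= (Y - c*c)/k) by (unfold d; eapply Rle_trans; [apply Rmin_r|]; eapply Rle_trans; [apply Rmin_r| apply Rmin_l]).
assert (dZ : d <= (Z - c*c)/k) by (unfold d; eapply Rle_trans; [apply Rmin_r|]; eapply Rle_trans; [apply Rmin_r| apply Rmin_r]).
assert (d0 : 0 < d).
{ unfold d. repeat apply Rmin_pos; try lra; apply Rdiv_lt_0_compat; lra. }
assert (Hc : 0 <= c * c) by nra.
assert (G : forall W, d <= (W - c*c)/k -> (1+d)^2*(c*c) <= W).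
{ intros W HW. assert (d * k <= W - c*c).
  { apply (Rmult_le_compat_r k) in HW; [|lra]. replace ((W - c*c)/k*k) with (W - c*c) in HW by (field; lra). lra. }
  unfold k in H. nra. }
repeat split; try lra; apply G; auto.
Qed.

Lemma key_identity a0 a1 a2 a3 a4 a5 s0 s1 s2 s3 s4 s5 r0 r1 r2 r3 r4 r5 lam sig : s0 <> 0 -> s1 <> 0 -> s2 <> 0 -> s3 <> 0 -> s4 <> 0 -> s5 <> 0 -> r0 <> 0 -> r1 <> 0 -> r2 <> 0 -> r3 <> 0 -> r4 <> 0 -> r5 <> 0 ->
  (a0/r0 + a1/r1 + a2/r2 + a3/r3 + a4/r4 + a5/r5) - (a0/s0 + a1/s1 + a2/s2 + a3/s3 + a4/s4 + a5/s5) - (((a0 / (s0^2 * r0) + lam * a0 / 2) * (r0 - s0)^2 + (a5 / (s5^2 * r5) + lam * a5 / 2) * (r5 - s5)^2 + sig * (r0 - s0) * (r5 - s5)) + ((a2 / (s2^2 * r2) + lam * a2 / 2) * (r2 - s2)^2 + (a3 / (s3^2 * r3) + lam * a3 / 2) * (r3 - s3)^2 + sig * (r2 - s2) * (r3 - s3)) + ((a1 / (s1^2 * r1) + lam * a1 / 2) * (r1 - s1)^2 + (a4 / (s4^2 * r4) + lam * a4 / 2) * (r4 - s4)^2 + (-sig) * (r1 - s1) * (r4 - s4))) =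
  (- a0 / s0^2 + lam * a0 * s0 + sig * s5) * (r0 - s0) + (- a1 / s1^2 + lam * a1 * s1 + sig * (- s4)) * (r1 - s1) + (- a2 / s2^2 + lam * a2 * s2 + sig * s3) * (r2 - s2) + (- a3 / s3^2 + lam * a3 * s3 + sig * s2) * (r3 - s3) + (- a4 / s4^2 + lam * a4 * s4 + sig * (- s1)) * (r4 - s4) + (- a5 / s5^2 + lam * a5 * s5 + sig * s0) * (r5 - s5)
  - lam / 2 * ((a0*r0^2 + a1*r1^2 + a2*r2^2 + a3*r3^2 + a4*r4^2 + a5*r5^2) - (a0*s0^2 + a1*s1^2 + a2*s2^2 + a3*s3^2 + a4*s4^2 + a5*s5^2))
  - sig * ((r0*r5 + r2*r3 - r1*r4) - (s0*s5 + s2*s3 - s1*s4)).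
Proof. intros. field. repeat split; auto. Qed.

Lemma key2 a0 a1 a2 a3 a4 a5 s0 s1 s2 s3 s4 s5 r0 r1 r2 r3 r4 r5 lam sig : s0 <> 0 -> s1 <> 0 -> s2 <> 0 -> s3 <> 0 -> s4 <> 0 -> s5 <> 0 -> r0 <> 0 -> r1 <> 0 -> r2 <> 0 -> r3 <> 0 -> r4 <> 0 -> r5 <> 0 -> (- a0 / s0^2 + lam * a0 * s0 + sig * s5) = 0 -> (- a1 / s1^2 + lam * a1 * s1 + sig * (- s4)) = 0 -> (- a2 / s2^2 + lam * a2 * s2 + sig * s3) = 0 -> (- a3 / s3^2 + lam * a3 * s3 + sig * s2) = 0 -> (- a4 / s4^2 + lam * a4 * s4 + sig * (- s1)) = 0 -> (- a5 / s5^2 + lam * a5 * s5 + sig * s0) = 0 ->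
  a0*r0^2 + a1*r1^2 + a2*r2^2 + a3*r3^2 + a4*r4^2 + a5*r5^2 = a0*s0^2 + a1*s1^2 + a2*s2^2 + a3*s3^2 + a4*s4^2 + a5*s5^2 -> r0*r5 + r2*r3 - r1*r4 = s0*s5 + s2*s3 - s1*s4 ->
  (a0/r0 + a1/r1 + a2/r2 + a3/r3 + a4/r4 + a5/r5) - (a0/s0 + a1/s1 + a2/s2 + a3/s3 + a4/s4 + a5/s5) = ((a0 / (s0^2 * r0) + lam * a0 / 2) * (r0 - s0)^2 + (a5 / (s5^2 * r5) + lam * a5 / 2) * (r5 - s5)^2 + sig * (r0 - s0) * (r5 - s5)) + ((a2 / (s2^2 * r2) + lam * a2 / 2) * (r2 - s2)^2 + (a3 / (s3^2 * r3) + lam * a3 / 2) * (r3 - s3)^2 + sig * (r2 - s2) * (r3 - s3)) + ((a1 / (s1^2 * r1) + lam * a1 / 2) * (r1 - s1)^2 + (a4 / (s4^2 * r4) + lam * a4 / 2) * (r4 - s4)^2 + (-sig) * (r1 - s1) * (r4 - s4)).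
Proof.
intros Hs0 Hs1 Hs2 Hs3 Hs4 Hs5 Hr0 Hr1 Hr2 Hr3 Hr4 Hr5 E0 E1 E2 E3 E4 E5 HX HP.
pose proof (key_identity a0 a1 a2 a3 a4 a5 s0 s1 s2 s3 s4 s5 r0 r1 r2 r3 r4 r5 lam sig Hs0 Hs1 Hs2 Hs3 Hs4 Hs5 Hr0 Hr1 Hr2 Hr3 Hr4 Hr5) as K.
rewrite E0, E1, E2, E3, E4, E5, HX, HP in K. lra.
Qed.


Lemma eq_mul m s l d : 0 < s -> - m / s^2 + l * m * s + d = 0 -> m / s = l * m * s^2 + d * s.
Proof.
intros Hs E. apply (Rmult_eq_reg_r (/ s)); [| apply Rinv_neq_0_compat; lra].
replace (m / s * / s) with (m / s^2) by (field; lra).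
replace ((l * m * s ^ 2 + d * s) * / s) with (l * m * s + d) by (field; lra). lra.
Qed.

Lemma crit_data (m1 m2 m3 m4 : R) (rs : config) (lam sig : R) : 0 < m1 -> 0 < m2 -> 0 < m3 -> 0 < m4 ->
  Defs.Mplus m1 m2 m3 m4 rs -> (forall k, (k < 6)%nat -> 0 < rs k) ->
  lagrange_mult m1 m2 m3 m4 rs lam sig ->
  0 < lam /\
  - (m1*m2) / rs 0%nat ^2 + lam * (m1*m2) * rs 0%nat + sig * rs 5%nat = 0 /\
  - (m1*m3) / rs 1%nat ^2 + lam * (m1*m3) * rs 1%nat + sig * (- rs 4%nat) = 0 /\
  - (m1*m4) / rs 2%nat ^2 + lam * (m1*m4) * rs 2%nat + sig * rs 3%nat = 0 /\
  - (m2*m3) / rs 3%nat ^2 + lam * (m2*m3) * rs 3%nat + sig * rs 2%nat = 0 /\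
  - (m2*m4) / rs 4%nat ^2 + lam * (m2*m4) * rs 4%nat + sig * (- rs 1%nat) = 0 /\
  - (m3*m4) / rs 5%nat ^2 + lam * (m3*m4) * rs 5%nat + sig * rs 0%nat = 0.
Proof.
intros H1 H2 H3 H4 [_ [HI HP]] Hpos Hlag.
assert (HM : Mtot m1 m2 m3 m4 <> 0) by (unfold Mtot; lra).
assert (E : forall k, (k < 6)%nat -> gL m1 m2 m3 m4 lam sig k rs = 0).
{ intros k Hk. rewrite <- pd_L; auto. apply Rgt_not_eq, Hpos; auto. }
pose proof (E 0%nat ltac:(lia)) as E0. pose proof (E 1%nat ltac:(lia)) as E1.
pose proof (E 2%nat ltac:(lia)) as E2. pose proof (E 3%nat ltac:(lia)) as E3.
pose proof (E 4%nat ltac:(lia)) as E4. pose proof (E 5%nat ltac:(lia)) as E5.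
unfold gL, dP, mpair in E0, E1, E2, E3, E4, E5.
pose proof (Hpos 0%nat ltac:(lia)) as P0. pose proof (Hpos 1%nat ltac:(lia)) as P1.
pose proof (Hpos 2%nat ltac:(lia)) as P2. pose proof (Hpos 3%nat ltac:(lia)) as P3.
pose proof (Hpos 4%nat ltac:(lia)) as P4. pose proof (Hpos 5%nat ltac:(lia)) as P5.
split; [| repeat split; assumption].
unfold Imom, sum6, Mtot in HI; cbn [sum_f_R0 mpair] in HI.
unfold Pcay in HP.
pose proof (eq_mul _ _ _ _ P0 E0) as F0. pose proof (eq_mul _ _ _ _ P1 E1) as F1.
pose proof (eq_mul _ _ _ _ P2 E2) as F2. pose proof (eq_mul _ _ _ _ P3 E3) as F3.
pose proof (eq_mul _ _ _ _ P4 E4) as F4. pose proof (eq_mul _ _ _ _ P5 E5) as F5.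
set (X := m1 * m2 * rs 0%nat ^ 2 + m1 * m3 * rs 1%nat ^ 2 + m1 * m4 * rs 2%nat ^ 2 +
          m2 * m3 * rs 3%nat ^ 2 + m2 * m4 * rs 4%nat ^ 2 + m3 * m4 * rs 5%nat ^ 2) in HI.
assert (HX : X = 2 * (m1 + m2 + m3 + m4)).
{ apply (Rmult_eq_reg_l (/ (2 * (m1 + m2 + m3 + m4)))); [|apply Rinv_neq_0_compat; lra].
  rewrite HI. field. lra. }
set (U := m1*m2 / rs 0%nat + m1*m3 / rs 1%nat + m1*m4 / rs 2%nat + m2*m3 / rs 3%nat + m2*m4 / rs 4%nat + m3*m4 / rs 5%nat).
assert (HU : 0 < U).
{ unfold U. repeat apply Rplus_lt_0_compat; apply Rdiv_lt_0_compat; auto; apply Rmult_lt_0_compat; auto. }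
assert (HUX : U = lam * X + 2 * sig * (rs 0%nat * rs 5%nat + rs 2%nat * rs 3%nat - rs 1%nat * rs 4%nat)).
{ unfold U. rewrite F0, F1, F2, F3, F4, F5. unfold X. ring. }
rewrite HP, HX in HUX.
assert (0 < m1 + m2 + m3 + m4) by lra.
nra.
Qed.


Lemma nondeg (m1 m2 m3 m4 : R) (rs : config) (lam sig : R) (v : config) :
  0 < m1 -> 0 < m2 -> 0 < m3 -> 0 < m4 ->
  Defs.Mplus m1 m2 m3 m4 rs -> (forall k, (k < 6)%nat -> 0 < rs k) ->
  lagrange_mult m1 m2 m3 m4 rs lam sig ->
  (exists k, (k < 6)%nat /\ v k <> 0) ->
  0 < sum6 (fun i => sum6 (fun j =>
          v i * v j * hess (Lagr m1 m2 m3 m4 lam sig) i j rs)).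
Proof.
intros H1 H2 H3 H4 HMp Hpos Hlag Hv.
destruct (crit_data m1 m2 m3 m4 rs lam sig H1 H2 H3 H4 HMp Hpos Hlag) as [Hl [E0 [E1 [E2 [E3 [E4 E5]]]]]].
assert (HM : Mtot m1 m2 m3 m4 <> 0) by (unfold Mtot; lra).
assert (Hne : forall k, (k < 6)%nat -> rs k <> 0) by (intros k Hk; apply Rgt_not_eq, Hpos; auto).
pose proof (Hpos 0%nat ltac:(lia)) as P0. pose proof (Hpos 1%nat ltac:(lia)) as P1.
pose proof (Hpos 2%nat ltac:(lia)) as P2. pose proof (Hpos 3%nat ltac:(lia)) as P3.
pose proof (Hpos 4%nat ltac:(lia)) as P4. pose proof (Hpos 5%nat ltac:(lia)) as P5.
unfold sum6; cbn [sum_f_R0].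
repeat (rewrite hess_L; [| exact HM | lia | lia | exact Hne]).
cbv beta iota delta [Hc cP dP mpair Nat.eqb].
assert (m12 : 0 < m1*m2) by nra. assert (m13 : 0 < m1*m3) by nra. assert (m14 : 0 < m1*m4) by nra.
assert (m23 : 0 < m2*m3) by nra. assert (m24 : 0 < m2*m4) by nra. assert (m34 : 0 < m3*m4) by nra.
pose proof (pairPD _ _ _ _ lam sig m12 m34 P0 P5 Hl E0 E5) as Q05.
pose proof (pairPD _ _ _ _ lam sig m14 m23 P2 P3 Hl E2 E3) as Q23.
assert (E1' : - (m1*m3) / rs 1%nat ^2 + lam * (m1*m3) * rs 1%nat + (- sig) * rs 4%nat = 0) by (rewrite <- E1; ring).
assert (E4' : - (m2*m4) / rs 4%nat ^2 + lam * (m2*m4) * rs 4%nat + (- sig) * rs 1%nat = 0) by (rewrite <- E4; ring).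
pose proof (pairPD _ _ _ _ lam (- sig) m13 m24 P1 P4 Hl E1' E4') as Q14.
set (A0 := 2 * (m1*m2) / rs 0%nat ^3 + lam * (m1*m2)) in *.
set (A1 := 2 * (m1*m3) / rs 1%nat ^3 + lam * (m1*m3)) in *.
set (A2 := 2 * (m1*m4) / rs 2%nat ^3 + lam * (m1*m4)) in *.
set (A3 := 2 * (m2*m3) / rs 3%nat ^3 + lam * (m2*m3)) in *.
set (A4 := 2 * (m2*m4) / rs 4%nat ^3 + lam * (m2*m4)) in *.
set (A5 := 2 * (m3*m4) / rs 5%nat ^3 + lam * (m3*m4)) in *.
assert (PA : forall m s, 0 < m -> 0 < s -> 0 < 2 * m / s^3 + lam * m).
{ intros m s Hm Hs. assert (0 < 2 * m / s^3) by (apply Rdiv_lt_0_compat; [lra | apply pow_lt; lra]). nra. }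
assert (A0p : 0 < A0) by (apply PA; auto). assert (A1p : 0 < A1) by (apply PA; auto).
assert (A2p : 0 < A2) by (apply PA; auto). assert (A3p : 0 < A3) by (apply PA; auto).
assert (A4p : 0 < A4) by (apply PA; auto). assert (A5p : 0 < A5) by (apply PA; auto).
match goal with |- 0 < ?e =>
  replace e with ((A0 * v 0%nat ^2 + A5 * v 5%nat ^2 + 2 * sig * v 0%nat * v 5%nat)
    + (A2 * v 2%nat ^2 + A3 * v 3%nat ^2 + 2 * sig * v 2%nat * v 3%nat)
    + (A1 * v 1%nat ^2 + A4 * v 4%nat ^2 + 2 * (- sig) * v 1%nat * v 4%nat)) by ring end.
destruct Hv as [k [Hk Hvk]].
assert (N05 := Q_nonneg A0 A5 sig (v 0%nat) (v 5%nat) A0p (Rlt_le _ _ Q05)).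
assert (N23 := Q_nonneg A2 A3 sig (v 2%nat) (v 3%nat) A2p (Rlt_le _ _ Q23)).
assert (N14 := Q_nonneg A1 A4 (-sig) (v 1%nat) (v 4%nat) A1p (Rlt_le _ _ Q14)).
destruct k as [|[|[|[|[|[|k]]]]]]; try lia.
- pose proof (Q_pos A0 A5 sig (v 0%nat) (v 5%nat) A0p Q05 (or_introl Hvk)). lra.
- pose proof (Q_pos A1 A4 (-sig) (v 1%nat) (v 4%nat) A1p Q14 (or_introl Hvk)). lra.
- pose proof (Q_pos A2 A3 sig (v 2%nat) (v 3%nat) A2p Q23 (or_introl Hvk)). lra.
- pose proof (Q_pos A2 A3 sig (v 2%nat) (v 3%nat) A2p Q23 (or_intror Hvk)). lra.
- pose proof (Q_pos A1 A4 (-sig) (v 1%nat) (v 4%nat) A1p Q14 (or_intror Hvk)). lra.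
- pose proof (Q_pos A0 A5 sig (v 0%nat) (v 5%nat) A0p Q05 (or_intror Hvk)). lra.
Qed.


Lemma close_bound (r s d e : R) : 0 < s -> 0 < d <= 1 -> e <= d * s -> Rabs (r - s) < e ->
  0 < r /\ r <= (1 + d) * s.
Proof.
intros Hs Hd He Ha. apply Rabs_def2 in Ha. destruct Ha. split; nra.
Qed.

Lemma locmin (m1 m2 m3 m4 : R) (rs : config) (lam sig : R) :
  0 < m1 -> 0 < m2 -> 0 < m3 -> 0 < m4 ->
  Defs.Mplus m1 m2 m3 m4 rs -> (forall k, (k < 6)%nat -> 0 < rs k) ->
  lagrange_mult m1 m2 m3 m4 rs lam sig ->
  local_min_on_Mplus m1 m2 m3 m4 rs.
Proof.
intros H1 H2 H3 H4 HMp Hpos Hlag.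
destruct (crit_data m1 m2 m3 m4 rs lam sig H1 H2 H3 H4 HMp Hpos Hlag) as [Hl [E0 [E1 [E2 [E3 [E4 E5]]]]]].
pose proof (Hpos 0%nat ltac:(lia)) as P0. pose proof (Hpos 1%nat ltac:(lia)) as P1.
pose proof (Hpos 2%nat ltac:(lia)) as P2. pose proof (Hpos 3%nat ltac:(lia)) as P3.
pose proof (Hpos 4%nat ltac:(lia)) as P4. pose proof (Hpos 5%nat ltac:(lia)) as P5.
assert (m12 : 0 < m1*m2) by nra. assert (m13 : 0 < m1*m3) by nra. assert (m14 : 0 < m1*m4) by nra.
assert (m23 : 0 < m2*m3) by nra. assert (m24 : 0 < m2*m4) by nra. assert (m34 : 0 < m3*m4) by nra.
pose proof (pairPD _ _ _ _ lam sig m12 m34 P0 P5 Hl E0 E5) as Q05.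
pose proof (pairPD _ _ _ _ lam sig m14 m23 P2 P3 Hl E2 E3) as Q23.
assert (E1' : - (m1*m3) / rs 1%nat ^2 + lam * (m1*m3) * rs 1%nat + (- sig) * rs 4%nat = 0) by (rewrite <- E1; ring).
assert (E4' : - (m2*m4) / rs 4%nat ^2 + lam * (m2*m4) * rs 4%nat + (- sig) * rs 1%nat = 0) by (rewrite <- E4; ring).
pose proof (pairPD _ _ _ _ lam (- sig) m13 m24 P1 P4 Hl E1' E4') as Q14.
replace (- sig * - sig) with (sig * sig) in Q14 by ring.
destruct (choose_d _ _ _ sig Q05 Q23 Q14) as [d [Hd [D05 [D23 D14]]]].
set (smin := Rmin (rs 0%nat) (Rmin (rs 1%nat) (Rmin (rs 2%nat) (Rmin (rs 3%nat) (Rmin (rs 4%nat) (rs 5%nat)))))).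
assert (Hsmin : 0 < smin) by (unfold smin; repeat apply Rmin_pos; auto).
assert (S0 : smin <= rs 0%nat) by (unfold smin; apply Rmin_l).
assert (S1 : smin <= rs 1%nat) by (unfold smin; eapply Rle_trans; [apply Rmin_r|apply Rmin_l]).
assert (S2 : smin <= rs 2%nat) by (unfold smin; do 2 (eapply Rle_trans; [apply Rmin_r|]); apply Rmin_l).
assert (S3 : smin <= rs 3%nat) by (unfold smin; do 3 (eapply Rle_trans; [apply Rmin_r|]); apply Rmin_l).
assert (S4 : smin <= rs 4%nat) by (unfold smin; do 4 (eapply Rle_trans; [apply Rmin_r|]); apply Rmin_l).
assert (S5 : smin <= rs 5%nat) by (unfold smin; do 4 (eapply Rle_trans; [apply Rmin_r|]); apply Rmin_r).
exists (d * smin). split; [nra|].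
intros r [_ [HIr HPr]] Hcl.
assert (Hle : forall k, (k < 6)%nat -> smin <= rs k -> 0 < r k /\ r k <= (1 + d) * rs k).
{ intros k Hk Hs. apply (close_bound _ _ d (d * smin)); auto. nra. }
destruct (Hle 0%nat ltac:(lia) S0) as [R0 R0'].
destruct (Hle 1%nat ltac:(lia) S1) as [R1 R1'].
destruct (Hle 2%nat ltac:(lia) S2) as [R2 R2'].
destruct (Hle 3%nat ltac:(lia) S3) as [R3 R3'].
destruct (Hle 4%nat ltac:(lia) S4) as [R4 R4'].
destruct (Hle 5%nat ltac:(lia) S5) as [R5 R5'].
destruct HMp as [_ [HIs HPs]].
unfold Imom, sum6, Mtot in HIr, HIs; cbn [sum_f_R0 mpair] in HIr, HIs.
unfold Pcay in HPr, HPs.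
assert (HX : m1 * m2 * r 0%nat ^ 2 + m1 * m3 * r 1%nat ^ 2 + m1 * m4 * r 2%nat ^ 2 +
          m2 * m3 * r 3%nat ^ 2 + m2 * m4 * r 4%nat ^ 2 + m3 * m4 * r 5%nat ^ 2 =
          m1 * m2 * rs 0%nat ^ 2 + m1 * m3 * rs 1%nat ^ 2 + m1 * m4 * rs 2%nat ^ 2 +
          m2 * m3 * rs 3%nat ^ 2 + m2 * m4 * rs 4%nat ^ 2 + m3 * m4 * rs 5%nat ^ 2).
{ apply (Rmult_eq_reg_l (/ (2 * (m1 + m2 + m3 + m4)))); [|apply Rinv_neq_0_compat; lra].
  rewrite HIr, HIs. reflexivity. }
assert (HP : r 0%nat * r 5%nat + r 2%nat * r 3%nat - r 1%nat * r 4%nat =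
             rs 0%nat * rs 5%nat + rs 2%nat * rs 3%nat - rs 1%nat * rs 4%nat) by lra.
pose proof (key2 (m1*m2) (m1*m3) (m1*m4) (m2*m3) (m2*m4) (m3*m4)
  (rs 0%nat) (rs 1%nat) (rs 2%nat) (rs 3%nat) (rs 4%nat) (rs 5%nat)
  (r 0%nat) (r 1%nat) (r 2%nat) (r 3%nat) (r 4%nat) (r 5%nat) lam sig
  ltac:(lra) ltac:(lra) ltac:(lra) ltac:(lra) ltac:(lra) ltac:(lra)
  ltac:(lra) ltac:(lra) ltac:(lra) ltac:(lra) ltac:(lra) ltac:(lra)
  E0 E1 E2 E3 E4 E5 HX HP) as K.
pose proof (pair_nonneg _ _ _ _ (r 0%nat) (r 5%nat) lam sig d m12 m34 P0 P5 Hl ltac:(lra) R0 R0' R5 R5' D05) as N05.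
pose proof (pair_nonneg _ _ _ _ (r 2%nat) (r 3%nat) lam sig d m14 m23 P2 P3 Hl ltac:(lra) R2 R2' R3 R3' D23) as N23.
replace (sig * sig) with ((- sig) * (- sig)) in D14 by ring.
pose proof (pair_nonneg _ _ _ _ (r 1%nat) (r 4%nat) lam (- sig) d m13 m24 P1 P4 Hl ltac:(lra) R1 R1' R4 R4' D14) as N14.
unfold Upot, sum6; cbn [sum_f_R0 mpair].
lra.
Qed.


Theorem proposition3 (m1 m2 m3 m4 : R) (rs : config) :
  0 < m1 -> 0 < m2 -> 0 < m3 -> 0 < m4 ->
  critical_point m1 m2 m3 m4 rs ->
  local_min_on_Mplus m1 m2 m3 m4 rs /\ nondeg_min_hessian m1 m2 m3 m4 rs.
Proof.
intros H1 H2 H3 H4 [HMp [Hpos [lam [sig Hlag]]]].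
split.
- exact (locmin m1 m2 m3 m4 rs lam sig H1 H2 H3 H4 HMp Hpos Hlag).
- intros lam' sig' Hlag' v _ Hv.
  exact (nondeg m1 m2 m3 m4 rs lam' sig' v H1 H2 H3 H4 HMp Hpos Hlag' Hv).
Qed.
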